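(* Let $f=a_0+a_1x+\cdots+a_nx^n\in\mathbb{Z}[x]$ be a primitive polynomial. Suppose that $a_0=\pm p^k d$ and $\gcd(a_0,a_1)=p^k$ for some positive integers $k$ and $d$ and a prime number $p$, where $p\nmid a_2 d$ and $k$ is odd, and that every zero $\theta\in\mathbb{C}$ of $f$ satisfies $|\theta|>d$. Then $f$ is irreducible in $\mathbb{Z}[x]$.
   Context: A polynomial $a_0+a_1x+\cdots+a_nx^n\in\mathbb{Z}[x]$ is primitive if $\gcd(a_0,a_1,\ldots,a_n)=1$. Coefficients $a_i$ with $i>n$ are taken to be $0$. *)

(* Defs.v *)
From mathcomp Require Import all_boot all_algebra all_field.
Set Implicit Arguments. Unset Strict Implicit. Unset Printing Implicit Defensive.
Import GRing.Theory Num.Theory.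
Local Open Scope ring_scope.

Definition primitive_Zpoly (f : {poly int}) : Prop :=
  \big[gcdz/0]_(i < size f) f`_i = 1.

Definition irreducible_in_Zx (f : {poly int}) : Prop :=
  f != 0 /\ f \isn't a GRing.unit /\
  forall g h : {poly int}, f = g * h -> g \is a GRing.unit \/ h \is a GRing.unit.

(* Main.v *)
Require Import Defs.
From mathcomp Require Import all_boot all_order all_algebra all_field.
From mathcomp Require Import ring.
Import Order.TTheory GRing.Theory Num.Theory.
Local Open Scope ring_scope.

Lemma prod_gt {d : nat} {r : seq algC} : (0 < d)%N -> r != [::] ->
  (forall z, z \in r -> d%:R < `|z|) -> d%:R < \prod_(z <- r) `|z|.
Proof.
move=> d0; case: r => [//|z r] _ hr.
rewrite big_cons.
have h1 : 1 <= \prod_(y <- r) `|y|.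
  have : forall y, y \in r -> 1 <= `|y|.
    move=> y yr; apply: le_trans (ltW (hr y _)); first by rewrite ler1n.
    by rewrite inE yr orbT.
  elim: r {hr} => [|y r IH] hr; first by rewrite big_nil.
  rewrite big_cons; apply: (@le_trans _ _ (1 * 1)); first by rewrite mulr1.
  apply: ler_pM => //.
  + by apply: hr; rewrite inE eqxx.
  + by apply: IH => x xr; apply: hr; rewrite inE xr orbT.
have hz : d%:R < `|z| by apply: hr; rewrite inE eqxx.
apply: (lt_le_trans hz); rewrite -{1}[`|z|]mulr1; apply: ler_wpM2l => //.
Qed.

Lemma root_bound (g : {poly int}) (d : nat) : (1 < size g)%N -> (0 < d)%N ->
  (forall theta : algC, root (map_poly intr g) theta -> d%:R < `|theta|) ->
  (d < absz (g`_0)%R)%N.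
Proof.
move=> sg d0 hr.
set G := map_poly (intr : int -> algC) g.
have sG : size G = size g by apply: size_map_inj_poly; [exact: intr_inj | exact: rmorph0].
have [r Gr] := closed_field_poly_normal G.
have gnz : g != 0 by rewrite -size_poly_gt0 (ltn_trans _ sg).
have lcG : lead_coef G = (lead_coef g)%:~R.
  by apply: lead_coef_map_inj; [exact: intr_inj | exact: rmorph0].
have lcnz : lead_coef G != 0 by rewrite lcG intr_eq0 lead_coef_eq0.
have sr : size G = (size r).+1.
  by rewrite {1}Gr size_scale // size_prod_XsubC.
have rnil : r != [::] by apply/eqP => r0; move: sr; rewrite r0 sG => sg1; rewrite sg1 in sg.
have rroot : forall z, z \in r -> d%:R < `|z|.
  move=> z zr; apply: hr; rewrite -/G Gr rootZ // root_prod_XsubC //.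
have e0 : G.[0] = lead_coef G * \prod_(z <- r) (- z).
  rewrite {1}Gr hornerZ horner_prod; congr (_ * _); apply: eq_bigr => z _.
  by rewrite hornerXsubC sub0r.
have : d%:R < `|G.[0]|.
  rewrite e0 normrM normr_prod.
  have -> : \prod_(z <- r) `|- z| = \prod_(z <- r) `|z| by apply: eq_bigr => z _; rewrite normrN.
  have h := prod_gt d0 rnil rroot.
  apply: (lt_le_trans h); rewrite -{1}[\prod_(z <- r) _]mul1r; apply: ler_wpM2r.
    by apply: prodr_ge0 => *.
  rewrite lcG -intr_norm ler1z.
  by rewrite -gtz0_ge1 normr_gt0 lead_coef_eq0.
rewrite /G horner_coef0 coef_map /= -intr_norm.
rewrite -abszE; by rewrite (ltr_nat algC).
Qed.
Lemma logn0 {p n : nat} : prime p -> (0 < n)%N -> ~~ (p %| n)%N -> logn p n = 0%N.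
Proof.
move=> pp n0 nd; apply/eqP; rewrite -leqn0 leqNgt logn_gt0 mem_primes.
by rewrite pp n0 (negbTE nd).
Qed.

Lemma dvd_logn {p n : nat} : prime p -> (0 < n)%N -> (p %| n)%N = (0 < logn p n)%N.
Proof. by move=> pp n0; rewrite -(pfactor_dvdn 1 pp n0) expn1. Qed.

Lemma core (p k d : nat) (b0 b1 b2 c0 c1 c2 : int) :
  prime p -> odd k -> absz (b0 * c0)%R = (p ^ k * d)%N ->
  ((p ^ k)%:Z %| b0 * c1 + b1 * c0)%Z ->
  ~~ (p%:Z %| (b0 * c2 + b1 * c1 + b2 * c0) * d%:Z)%Z ->
  (d < absz b0)%N -> (d < absz c0)%N ->
  (logn p (absz b0) < logn p (absz c0))%N -> False.
Proof.
move=> pp ok hBC ha1 ha2 hB hC hlt.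
have pnd : ~~ (p %| d)%N.
  apply: contra ha2 => pd; apply: dvdz_mull; by rewrite dvdzE.
have B0 : (0 < absz b0)%N by apply: leq_ltn_trans hB.
have C0 : (0 < absz c0)%N by apply: leq_ltn_trans hC.
have p0 : (0 < p)%N by apply: prime_gt0.
have d0 : (0 < d)%N by move: pnd; case: d {hB hC hBC ha2} => //; rewrite dvdn0.
have hk : (logn p (absz b0) + logn p (absz c0))%N = k.
  rewrite -lognM // -abszM hBC lognM ?expn_gt0 ?p0 // pfactorK //.
  by rewrite (logn0 pp d0 pnd) addn0.
case: (posnP (logn p (absz b0))) => hi.
  have nB : ~~ (p %| absz b0)%N by rewrite (dvd_logn pp B0) hi.
  have cop : coprime (absz b0) (p ^ k) by rewrite coprimeXr // coprime_sym prime_coprime.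
  have : (absz b0 %| d)%N by rewrite -(Gauss_dvdr _ cop) -hBC abszM dvdn_mulr.
  by move/(dvdn_leq d0); rewrite leqNgt hB.
set i := logn p (absz b0) in hi hk hlt.
have pb0 : (p%:Z %| b0)%Z by rewrite dvdzE /= (dvd_logn pp B0).
have pc0 : (p%:Z %| c0)%Z by rewrite dvdzE /= (dvd_logn pp C0) (leq_ltn_trans _ hlt).
have pc1 : ~~ (p%:Z %| c1)%Z.
  apply: contra ha2 => pc1; apply: dvdz_mulr.
  rewrite rpredD ?rpredD //; [exact: dvdz_mulr | exact: dvdz_mull | exact: dvdz_mull].
have c1nz : c1 != 0 by apply: contraNneq pc1 => ->; apply: dvdz0.
have C1 : (0 < absz c1)%N by rewrite absz_gt0.
have hc0 : ((p ^ i.+1)%:Z %| c0)%Z by rewrite dvdzE /= (pfactor_dvdn _ pp C0).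
have hpk : ((p ^ i.+1)%:Z %| (p ^ k)%:Z)%Z.
  by rewrite dvdzE /= dvdn_exp2l // -hk -addn1 leq_add2l (leq_ltn_trans _ hlt).
have hb0c1 : ((p ^ i.+1)%:Z %| b0 * c1)%Z.
  have -> : b0 * c1 = (b0 * c1 + b1 * c0) - b1 * c0 by rewrite addrK.
  rewrite rpredB //; [exact: dvdz_trans hpk ha1 | exact: dvdz_mull].
move: hb0c1; rewrite dvdzE /= abszM (pfactor_dvdn _ pp) ?muln_gt0 ?B0 //.
rewrite lognM // (logn0 pp C1) ?addn0 ?ltnn //.
Qed.

Lemma unit_int (x : int) : (x \is a GRing.unit) = (absz x == 1%N).
Proof. by case: x => [[|[|n]]|[|n]]. Qed.

Theorem theorem23 (f : {poly int}) (p k d : nat) :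
  primitive_Zpoly f ->
  prime p -> (0 < k)%N -> (0 < d)%N -> odd k ->
  (f`_0 = (p ^ k * d)%:Z \/ f`_0 = - (p ^ k * d)%:Z) ->
  gcdz f`_0 f`_1 = (p ^ k)%:Z ->
  ~~ ((p%:Z %| f`_2 * d%:Z)%Z) ->
  (forall theta : algC, root (map_poly intr f) theta -> d%:R < `|theta|) ->
  irreducible_in_Zx f.
Proof.
move=> prim pp k0 d0 ok hf0 hg hnd hroot.
have pk1 : (1 < p ^ k)%N by rewrite -(exp1n k) ltn_exp2r // prime_gt1.
have absf0 : absz f`_0 = (p ^ k * d)%N by case: hf0 => ->; rewrite ?abszN.
have f0nz : f`_0 != 0 by rewrite -absz_gt0 absf0 muln_gt0 d0 (ltn_trans _ pk1).
have fnz : f != 0 by apply: contraNneq f0nz => ->; rewrite coef0.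
have prim_dvd : forall c : int, (forall i, (c %| f`_i)%Z) -> absz c = 1%N.
  move=> c hc; apply/eqP; rewrite -dvdz1.
  apply: (@eq_ind int _ (fun x => (c %| x)%Z) _ _ prim).
  apply: (big_ind (fun x => (c %| x)%Z)) => [|x y hx hy|i _].
  - exact: dvdz0.
  - by rewrite dvdz_gcd hx hy.
  - exact: hc.
have hpk1 : absz f`_0 != 1%N.
  rewrite absf0 muln_eq1; apply/negP => /andP[/eqP h _]; by rewrite h in pk1.
split; first exact: fnz.
split.
  by rewrite poly_unitE unit_int (negbTE hpk1) andbF.
move=> g h fgh.
have [ug|nug] := boolP (g \is a GRing.unit); first by left.
have [uh|nuh] := boolP (h \is a GRing.unit); first by right.
exfalso.
have gnz : g != 0 by apply: contraNneq fnz => g0; rewrite fgh g0 mul0r.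
have hnz : h != 0 by apply: contraNneq fnz => h0; rewrite fgh h0 mulr0.
have big : forall u v : {poly int}, f = u * v -> u != 0 -> u \isn't a GRing.unit -> (1 < size u)%N.
  move=> u v fuv unz nuu; rewrite ltnNge; apply/negP => su.
  have [c uc] : exists c, u = c%:P by exists u`_0; apply/size1_polyC.
  have c1 : absz c = 1%N by apply: prim_dvd => i; rewrite fuv uc coefCM dvdz_mulr.
  move: nuu; rewrite poly_unitE uc coefC /= unit_int c1 andbT size_polyC.
  by case: (c =P 0) c1 => [->|].
have sg := big g h fgh gnz nug.
have sh := big h g (etrans fgh (mulrC _ _)) hnz nuh.
have rt : forall u v : {poly int}, f = u * v ->
   forall theta : algC, root (map_poly intr u) theta -> d%:R < `|theta|.
  move=> u v fuv theta rut; apply: hroot; by rewrite fuv rmorphM rootM rut.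
have bg := root_bound _ _ sg d0 (rt _ _ fgh).
have bh := root_bound _ _ sh d0 (rt _ _ (etrans fgh (mulrC _ _))).
have e0 : f`_0 = g`_0 * h`_0 by rewrite fgh coef0M.
have e1 : f`_1 = g`_0 * h`_1 + g`_1 * h`_0.
  by rewrite fgh coefM !big_ord_recr big_ord0 /= add0r.
have e2 : f`_2 = g`_0 * h`_2 + g`_1 * h`_1 + g`_2 * h`_0.
  by rewrite fgh coefM !big_ord_recr big_ord0 /= add0r.
have a1 : ((p ^ k)%:Z %| f`_1)%Z by rewrite -hg dvdz_gcdr.
have hBC : absz (g`_0 * h`_0)%R = (p ^ k * d)%N by rewrite -e0.
case: (ltngtP (logn p (absz g`_0)) (logn p (absz h`_0))) => hl.
- apply: (core p k d g`_0 g`_1 g`_2 h`_0 h`_1 h`_2 pp ok hBC _ _ bg bh hl).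
  + by rewrite -e1.
  + by rewrite -e2.
- apply: (core p k d h`_0 h`_1 h`_2 g`_0 g`_1 g`_2 pp ok (_ : absz (h`_0 * g`_0)%R = _) _ _ bh bg hl).
  + by rewrite mulrC.
  + have -> : h`_0 * g`_1 + h`_1 * g`_0 = f`_1 by rewrite e1; ring.
    exact: a1.
  + have -> : h`_0 * g`_2 + h`_1 * g`_1 + h`_2 * g`_0 = f`_2 by rewrite e2; ring.
    exact: hnd.
- have B0 : (0 < absz (g`_0)%R)%N by apply: leq_ltn_trans bg.
  have C0 : (0 < absz (h`_0)%R)%N by apply: leq_ltn_trans bh.
  have pnd : ~~ (p %| d)%N.
    apply: contra hnd => pd; apply: dvdz_mull; by rewrite dvdzE.
  have hk : (logn p (absz (g`_0)%R) + logn p (absz (h`_0)%R))%N = k.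
    have p0 := prime_gt0 pp.
    rewrite -lognM // -abszM hBC lognM ?expn_gt0 ?p0 // pfactorK //.
    by rewrite (logn0 pp d0 pnd) addn0.
  move: ok; rewrite -hk hl addnn odd_double; done.
Qed.
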